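(* Let $k$ be an even integer and consider the bijections of $\mathbb{C}^3$ \[ \mathrm{w}:(s,w,u)\mapsto(w,s,-s-w-u+k),\quad a:(s,w,u)\mapsto(s+w-\tfrac12,1-w,w+u-\tfrac12),\quad c:(s,w,u)\mapsto(1-w,1-s,s+w+u-1). \] The group generated by $\mathrm{w},a,c$ under composition is isomorphic to the dihedral group of order twelve.
   Context: These three maps are the changes of variables $(s,w,u)\mapsto(\cdot)$ appearing in the three functional equations of the kernel $\Omega_{k,s,w,u}$. *)

(* Defs.v *)
From HB Require Import structures.
From mathcomp Require Import all_boot all_order all_algebra all_fingroup all_solvable.
From mathcomp Require Import complex reals.
Set Implicit Arguments. Unset Strict Implicit. Unset Printing Implicit Defensive.
Import GRing.Theory Num.Theory.
Local Open Scope ring_scope.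

Definition C3 (R : realType) := (R[i] * R[i] * R[i])%type.

Definition map_w (R : realType) (k : int) (x : C3 R) : C3 R :=
  let: (s, w, u) := x in (w, s, - s - w - u + k%:~R).

Definition map_a (R : realType) (x : C3 R) : C3 R :=
  let: (s, w, u) := x in (s + w - 1/2, 1 - w, w + u - 1/2).

Definition map_c (R : realType) (x : C3 R) : C3 R :=
  let: (s, w, u) := x in (1 - w, 1 - s, s + w + u - 1).

Inductive gen_group (T : Type) (S : (T -> T) -> Prop) : (T -> T) -> Prop :=
  | gen_in f : S f -> gen_group S f
  | gen_id : gen_group S id
  | gen_comp f g : gen_group S f -> gen_group S g -> gen_group S (f \o g)
  | gen_inv f g : gen_group S f -> cancel f g -> cancel g f -> gen_group S g.

Definition comp_group_isog (T : Type) (G : (T -> T) -> Prop) (H : finGroupType) :=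
  exists phi : (T -> T) -> H,
    [/\ (forall f g, G f -> G g -> phi (f \o g) = (phi f * phi g)%g),
        (forall f g, G f -> G g -> phi f = phi g -> f = g) &
        (forall h : H, exists2 f, G f & phi f = h)].

(* Main.v *)
Require Import Defs.
From HB Require Import structures.
From mathcomp Require Import all_boot all_order all_algebra all_fingroup all_solvable.
From mathcomp Require Import complex reals.
From mathcomp Require Import ring.
From Stdlib Require Import FunctionalExtensionality ClassicalEpsilon.
Import GRing.Theory Num.Theory.

Section Gen.
Variables (T : Type) (op : T -> T -> T) (e x y : T).
Hypotheses (opA : associative op) (op1 : left_id e op) (opr1 : right_id e op).

Definition pw (z : T) n := iter n (op z) e.
Definition enc i j := op (pw x i) (pw y j).
Definition mi (i j i' : nat) := ((i + (if j == 1%N then 5 * i' else i')) %% 6)%N.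
Definition mj (j j' : nat) := ((j + j') %% 2)%N.

Lemma pwD z m n : pw z (m + n) = op (pw z m) (pw z n).
Proof.
elim: m => [|m IH] /=; first by rewrite op1.
by rewrite IH opA.
Qed.

Lemma pw1 z : pw z 1 = z.
Proof. by rewrite /pw /= opr1. Qed.

Lemma pw_mod z N : pw z N = e -> forall n, pw z (n %% N) = pw z n.
Proof.
move=> hN n; rewrite {2}(div.divn_eq n N) addnC pwD.
suff -> : pw z (n %/ N * N) = e by rewrite opr1.
elim: (n %/ N) => [|q IH] //=.
by rewrite mulSn pwD hN op1.
Qed.

Hypotheses (x6 : pw x 6 = e) (y2 : pw y 2 = e) (yx : op y x = op (pw x 5) y).

Lemma y_pwx i : op y (pw x i) = op (pw x (5 * i)) y.
Proof.
elim: i => [|i IH]; first by rewrite /= op1 opr1.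
rewrite -addn1 pwD pw1 opA IH -opA yx opA -pwD.
by rewrite mulnDr muln1.
Qed.

Lemma encM i j i' j' : (j < 2)%N ->
  op (enc i j) (enc i' j') = enc (mi i j i') (mj j j').
Proof.
move=> hj; rewrite /enc /mi /mj (@pw_mod _ _ x6) (@pw_mod _ _ y2) pwD pwD.
case: j hj => [|[|//]] _ /=.
  by rewrite op1 opr1 !opA.
rewrite opr1 -!opA; congr (op _ _).
by rewrite !opA y_pwx.
Qed.

End Gen.
Arguments pw {T} op e z n.
Arguments enc {T} op e x y i j.


Definition I12 := ('I_6 * 'I_2)%type.
Definition mulp (p q : I12) : I12 := (inord (mi p.1 p.2 q.1), inord (mj p.2 q.2)).
Definition p0 : I12 := (ord0, ord0).

Section DG.
Variables (gT : finGroupType) (gx gy : gT).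
Hypotheses (hx6 : (gx ^+ 6 = 1)%g) (hy2 : (gy ^+ 2 = 1)%g) (hxy : (gx ^ gy = gx^-1)%g)
  (hgen : (<[gx]> <*> <[gy]>)%g = [set: gT]) (hcard : #|gT| = 12%N).

Lemma pwG (z : gT) n : pw mulg 1%g z n = (z ^+ n)%g.
Proof. elim: n => [|n IH] //=. rewrite IH. exact: (esym (expgS z n)). Qed.

Definition encG (p : I12) : gT := enc mulg 1%g gx gy p.1 p.2.

Lemma yxG : (gy * gx = pw mulg 1 gx 5 * gy)%g.
Proof.
rewrite pwG.
have yV : (gy^-1 = gy)%g.
 apply/eqP; rewrite eq_invg_mul -expg2 hy2 //.
have xV : (gx^-1 = gx ^+ 5)%g by apply/eqP; rewrite eq_invg_mul -expgS hx6.
by rewrite -xV -hxy /conjg yV -!mulgA -expg2 hy2 mulg1.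
Qed.

Lemma encGM p q : encG (mulp p q) = (encG p * encG q)%g.
Proof.
have h6 : pw mulg 1%g gx 6 = 1%g by rewrite pwG.
have h2 : pw mulg 1%g gy 2 = 1%g by rewrite pwG.
rewrite /encG (@encM _ mulg 1%g gx gy (@mulgA _) (@mul1g _) (@mulg1 _) h6 h2 yxG);
  last by case: p => ? [].

by rewrite /mulp /= !inordK ?ltn_pmod.
Qed.

Lemma encG_surj h : exists p, encG p = h.
Proof.
pose S := [set encG p | p in [set: I12]].
have gS : group_set S.
  apply/group_setP; split.
    by apply/imsetP; exists p0 => //; rewrite /encG /enc /= mulg1.
  move=> a b /imsetP[p _ ->] /imsetP[q _ ->].
  by rewrite -encGM imset_f.
have sub : [set: gT] \subset S.
  rewrite -hgen (@join_subG _ _ _ (Group gS)) !cycle_subG /=; apply/andP; split.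
    apply/imsetP; exists (inord 1, ord0) => //.
    by rewrite /encG /enc /= inordK //= !mulg1.
  apply/imsetP; exists (ord0, inord 1) => //.
  by rewrite /encG /enc /= inordK //= !mulg1 mul1g.
have : h \in S by apply: (subsetP sub); rewrite inE.
by case/imsetP=> p _ ->; exists p.
Qed.

Lemma encG_inj : injective encG.
Proof.
have cS : #|[set encG p | p in [set: I12]]| = 12%N.
  apply/eqP; rewrite eqn_leq; apply/andP; split.
    by rewrite -hcard max_card.
  rewrite -hcard -cardsT subset_leq_card //.
  apply/subsetP=> h _; have [p <-] := encG_surj h; exact: imset_f.
have /imset_injP inj : #|[set encG p | p in [set: I12]]| == #|[set: I12]|.
  by rewrite cS cardsT card_prod !card_ord.
by move=> p q; apply: inj; rewrite inE.
Qed.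

Lemma inv_idx p : exists q, mulp p q = p0.
Proof.
have [q hq] := encG_surj (encG p)^-1%g.
exists q; apply: encG_inj.
by rewrite encGM hq mulgV /encG /enc /= mulg1.
Qed.

Lemma inv_idx' p : exists q, mulp q p = p0.
Proof.
have [q hq] := encG_surj (encG p)^-1%g.
exists q; apply: encG_inj.
by rewrite encGM hq mulVg /encG /enc /= mulg1.
Qed.


Local Open Scope ring_scope.

Section Main.
Variables (R : realType) (k : int).

Definition FT := C3 R -> C3 R.
Definition fop (f g : FT) : FT := f \o g.
Definition X : FT := map_w k \o @map_a R.
Definition Y : FT := map_w k.

Lemma fopA : associative fop. Proof. by []. Qed.
Lemma fop1 : left_id id fop. Proof. by []. Qed.
Lemma fopr1 : right_id id fop. Proof. by []. Qed.

Ltac affine := apply: functional_extensionality => -[[s w] u];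
  rewrite /enc /pw /fop /X /Y /=; congr (_, _, _); by field.

Lemma X6 : pw fop id X 6 = id.
Proof. affine. Qed.

Lemma Y2 : pw fop id Y 2 = id.
Proof. affine. Qed.

Lemma YX : fop Y X = fop (pw fop id X 5) Y.
Proof. affine. Qed.

Definition F (p : I12) : FT := enc fop id X Y p.1 p.2.

Lemma Fmul p q : F (mulp p q) = fop (F p) (F q).
Proof.
rewrite /F (@encM _ fop id X Y fopA fop1 fopr1 X6 Y2 YX); last by case: p => ? [].
by rewrite /mulp /= !inordK ?ltn_pmod.
Qed.

Lemma F0 : F p0 = id.
Proof. by []. Qed.

Lemma contra_half (a b : R[i]) (z : int) : z != 0 -> z%:~R = 2 * (a - b) -> a = b -> False.
Proof.
move=> nz h ab; move: h; rewrite ab subrr mulr0 => /eqP.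
by rewrite intr_eq0 (negbTE nz).
Qed.

Lemma Fker r : F r = id -> r = p0.
Proof.
case: r => [[i hi] [j hj]].
case: i hi => [|[|[|[|[|[|i]]]]]] hi; case: j hj => [|[|j]] hj; try by [].
- by move=> _; congr (_, _); apply: val_inj.
- move/(congr1 (fun f => (f (1, 0, 0)).1.1)); rewrite /F /enc /pw /fop /X /Y /=.
  move=> E; exfalso; move: E.
  by apply: (@contra_half _ _ (- 2)%Z) => //; field.
- move/(congr1 (fun f => (f (0, 0, 0)).1.1)); rewrite /F /enc /pw /fop /X /Y /=.
  move=> E; exfalso; move: E.
  by apply: (@contra_half _ _ (2)%Z) => //; field.
- move/(congr1 (fun f => (f (0, 0, 0)).1.1)); rewrite /F /enc /pw /fop /X /Y /=.
  move=> E; exfalso; move: E.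
  by apply: (@contra_half _ _ (2)%Z) => //; field.
- move/(congr1 (fun f => (f (0, 0, 0)).1.1)); rewrite /F /enc /pw /fop /X /Y /=.
  move=> E; exfalso; move: E.
  by apply: (@contra_half _ _ (3)%Z) => //; field.
- move/(congr1 (fun f => (f (0, 0, 0)).1.1)); rewrite /F /enc /pw /fop /X /Y /=.
  move=> E; exfalso; move: E.
  by apply: (@contra_half _ _ (3)%Z) => //; field.
- move/(congr1 (fun f => (f (0, 0, 0)).1.1)); rewrite /F /enc /pw /fop /X /Y /=.
  move=> E; exfalso; move: E.
  by apply: (@contra_half _ _ (2)%Z) => //; field.
- move/(congr1 (fun f => (f (0, 0, 0)).1.1)); rewrite /F /enc /pw /fop /X /Y /=.
  move=> E; exfalso; move: E.
  by apply: (@contra_half _ _ (2)%Z) => //; field.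
- move/(congr1 (fun f => (f (0, 0, 0)).1.2)); rewrite /F /enc /pw /fop /X /Y /=.
  move=> E; exfalso; move: E.
  by apply: (@contra_half _ _ (3)%Z) => //; field.
- move/(congr1 (fun f => (f (0, 0, 0)).1.2)); rewrite /F /enc /pw /fop /X /Y /=.
  move=> E; exfalso; move: E.
  by apply: (@contra_half _ _ (3)%Z) => //; field.
- move/(congr1 (fun f => (f (0, 0, 0)).1.1)); rewrite /F /enc /pw /fop /X /Y /=.
  move=> E; exfalso; move: E.
  by apply: (@contra_half _ _ (- 1)%Z) => //; field.
- move/(congr1 (fun f => (f (0, 0, 0)).1.1)); rewrite /F /enc /pw /fop /X /Y /=.
  move=> E; exfalso; move: E.
  by apply: (@contra_half _ _ (- 1)%Z) => //; field.
Qed.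

Lemma Finj p q : F p = F q -> p = q.
Proof.
move=> e.
have [q' hq'] := inv_idx' q.
have h1 : fop (F q') (F p) = id by rewrite e -Fmul hq'.
have h2 : mulp q' p = p0 by apply: Fker; rewrite Fmul.
apply: encG_inj; apply: (@mulgI _ (encG q')).
by rewrite -!encGM h2 hq'.
Qed.

Definition Sg : FT -> Prop := fun f => f = map_w k \/ f = @map_a R \/ f = @map_c R.

Lemma G_F f : gen_group Sg f -> exists p, F p = f.
Proof.
elim=> {f}.
- move=> f [->|[->|->]].
  + exists (ord0, inord 1); rewrite /F /= !inordK //; affine.
  + exists (inord 5, inord 1); rewrite /F /= !inordK //; affine.
  + exists (inord 3, inord 1); rewrite /F /= !inordK //; affine.
- by exists p0.
- move=> f g _ [p <-] _ [q <-]; exists (mulp p q); exact: Fmul.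
- move=> f g _ [p <-] c1 c2.
  have [q hq] := inv_idx p.
  exists q; apply: functional_extensionality => z.
  have e : F p (F q z) = z.
    by have := Fmul p q; rewrite hq F0 => /(congr1 (fun h => h z)).
  by rewrite -{2}e c1.
Qed.

Lemma pw_G Z n : gen_group Sg Z -> gen_group Sg (pw fop id Z n).
Proof.
move=> hZ; elim: n => [|n IH] /=; first exact: gen_id.
exact: gen_comp.
Qed.

Lemma F_G p : gen_group Sg (F p).
Proof.
have hX : gen_group Sg X by apply: gen_comp; apply: gen_in; [left | right; left].
have hY : gen_group Sg Y by apply: gen_in; left.
by apply: gen_comp; apply: pw_G.
Qed.

Definition phi (f : FT) : gT := encG (epsilon (inhabits p0) (fun p => F p = f)).

Lemma phiF p : phi (F p) = encG p.
Proof.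
rewrite /phi.
have := epsilon_spec (inhabits p0) (fun r => F r = F p) (ex_intro _ p erefl).
by move/Finj => ->.
Qed.

Lemma main_iso : comp_group_isog (gen_group Sg) gT.
Proof.
exists phi; split.
- move=> f g /G_F[p <-] /G_F[q <-].
  have -> : F p \o F q = F (mulp p q) by rewrite Fmul.
  by rewrite !phiF encGM.
- by move=> f g /G_F[p <-] /G_F[q <-]; rewrite !phiF => /encG_inj ->.
- move=> h; have [p <-] := encG_surj h.
  exists (F p); [exact: F_G | exact: phiF].
Qed.

End Main.
End DG.

Theorem proposition4 (R : realType) (k : int) (hk : (2 %| k)%Z) :
  comp_group_isog
    (gen_group (fun f : C3 R -> C3 R =>
                  f = map_w k \/ f = @map_a R \/ f = @map_c R))
    'D_12.
Proof.
have := @Grp_dihedral 6 isT _ [set: 'D_12]%G.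
rewrite homg_refl => /esym/existsP[[x y]] /= /eqP[hgen hx6 hy2 hxy].
have hcard : #|'D_12| = 12%N by rewrite -cardsT (@card_dihedral 6).
have M := (@main_iso _ x y hx6 hy2 hxy hgen hcard R k).
exact: M.
Qed.
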